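(* Let $q,r\ge 0$, let $f:\mathbb{R}\to\mathbb{R}$ be $(q,r)$-continuous at every point of $\mathbb{R}$, and let $C\subseteq\mathbb{R}$ be $q$-connected. Then $f(C)$ is $r$-connected.
   Context: For $A\subseteq\mathbb{R}$ and $c\in\mathbb{R}$, $\mathrm{dist}(c,A)=\mathrm{dist}(A,c)=\inf\{|a-c| : a\in A\}$. For $r\ge0$, a set $C\subseteq\mathbb{R}$ is $r$-disconnected if $C=A\cup B$ for some nonempty sets $A,B$ such that $\mathrm{dist}(a,B)>r$ for every $a\in A$ and $\mathrm{dist}(A,b)>r$ for every $b\in B$; $C$ is $r$-connected if it is not $r$-disconnected. A function $f:\mathbb{R}\to\mathbb{R}$ is $(q,r)$-continuous at $a$ if for every $\varepsilon>0$ there is $\delta>0$ such that $|x-a|<q+\delta$ implies $|f(x)-f(a)|<r+\varepsilon$. *)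

(* Defs.v *)
From Stdlib Require Import Reals.
Open Scope R_scope.

Definition dist_set (c : R) (A : R -> Prop) : R -> Prop :=
  fun x => exists a, A a /\ x = Rabs (a - c).

Definition is_dist (c : R) (A : R -> Prop) (d : R) : Prop :=
  (forall x, dist_set c A x -> d <= x) /\
  (forall m, (forall x, dist_set c A x -> m <= x) -> m <= d).

Definition r_disconnected (r : R) (C : R -> Prop) : Prop :=
  exists A B : R -> Prop,
    (exists a, A a) /\ (exists b, B b) /\
    (forall x, C x <-> (A x \/ B x)) /\
    (forall a, A a -> exists d, is_dist a B d /\ d > r) /\
    (forall b, B b -> exists d, is_dist b A d /\ d > r).

Definition r_connected (r : R) (C : R -> Prop) : Prop := ~ r_disconnected r C.

Definition qr_continuous_at (q r : R) (f : R -> R) (a : R) : Prop :=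
  forall eps, eps > 0 -> exists delta, delta > 0 /\
    forall x, Rabs (x - a) < q + delta -> Rabs (f x - f a) < r + eps.

Definition image (f : R -> R) (C : R -> Prop) : R -> Prop :=
  fun y => exists x, C x /\ y = f x.

(* Main.v *)
Require Import Defs.
From Stdlib Require Import Reals Lra.
Open Scope R_scope.

Lemma dist_exists (c : R) (B : R -> Prop) (L : R) :
  (exists b, B b) -> (forall b, B b -> L <= Rabs (b - c)) ->
  exists d, is_dist c B d /\ L <= d.
Proof.
  intros [b Hb] HL.
  set (E := fun m => forall x, dist_set c B x -> m <= x).
  assert (HE : bound E).
  { exists (Rabs (b - c)). intros m Hm. apply Hm. exists b; split; auto. }
  assert (HL' : E L).
  { intros x [b' [Hb' ->]]. apply HL; auto. }
  destruct (completeness E HE (ex_intro _ L HL')) as [d [Hub Hlub]].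
  exists d. split; [split|].
  - intros x Hx. apply Hlub. intros m Hm. apply Hm; auto.
  - intros m Hm. apply Hub. exact Hm.
  - apply Hub; auto.
Qed.

Lemma side (q r : R) (f : R -> R) (C A B : R -> Prop)
  (hf : forall a, qr_continuous_at q r f a)
  (hB : exists b, B b)
  (hA : forall a, A a -> exists d, is_dist a B d /\ d > r) :
  (exists b, C b /\ B (f b)) ->
  forall a', (C a' /\ A (f a')) ->
  exists d, is_dist a' (fun x => C x /\ B (f x)) d /\ d > q.
Proof.
  intros Hne a' [HCa HAa].
  destruct (hA _ HAa) as [d [[Hd1 Hd2] Hdr]].
  destruct (hf a' (d - r)) as [delta [Hdel Hx]]; [lra|].
  destruct (dist_exists a' (fun x => C x /\ B (f x)) (q + delta)) as [d0 [Hd0 Hle]].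
  - exact Hne.
  - intros x [HCx HBx].
    destruct (Rlt_or_le (Rabs (x - a')) (q + delta)) as [Hlt|]; [|auto].
    exfalso. specialize (Hx x Hlt).
    assert (d <= Rabs (f x - f a')) by (apply Hd1; exists (f x); split; auto).
    lra.
  - exists d0; split; auto; lra.
Qed.

Theorem theorem6 (q r : R) (f : R -> R) (C : R -> Prop)
  (hq : 0 <= q) (hr : 0 <= r)
  (hf : forall a, qr_continuous_at q r f a)
  (hC : r_connected q C) :
  r_connected r (image f C).
Proof.
  intros [A [B [[a Ha] [[b Hb] [Hu [HA HB]]]]]].
  apply hC.
  exists (fun x => C x /\ A (f x)), (fun x => C x /\ B (f x)).
  assert (HAim : forall y, A y -> exists x, C x /\ y = f x)
    by (intros y Hy; apply Hu; auto).
  assert (HBim : forall y, B y -> exists x, C x /\ y = f x)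
    by (intros y Hy; apply Hu; auto).
  assert (HA' : exists x, C x /\ A (f x))
    by (destruct (HAim a Ha) as [x [Hx ->]]; eauto).
  assert (HB' : exists x, C x /\ B (f x))
    by (destruct (HBim b Hb) as [x [Hx ->]]; eauto).
  split; [exact HA'|]. split; [exact HB'|]. split; [|split].
  - intros x; split.
    + intros Hx. destruct (proj1 (Hu (f x)) (ex_intro _ x (conj Hx eq_refl))); auto.
    + intros [[? ?]|[? ?]]; auto.
  - apply (side q r f C A B hf (ex_intro _ b Hb) HA HB').
  - apply (side q r f C B A hf (ex_intro _ a Ha) HB HA').
Qed.
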